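(* Let $Q$ be a Jordan loop and $x\in Q$. Then for all integers $n\ge 0$: (i) $x^n x^2=x^{n+2}$; (ii) $x^n x^4=x^{n+4}$; (iii) $x^n x^8=x^{n+8}$ whenever $n\not\equiv 3 \pmod 4$; moreover, if $x^3x^8=x^{11}$, then $x^nx^8=x^{n+8}$ for all $n\ge 0$; (iv) for integers $k\ge 1$, $x^n x^{2^k}=x^{n+2^k}$ whenever $n\equiv 2^m \pmod{2^{k-1}}$ for some integer $m$ with $0\le m\le k-1$; (v) for integers $n\ge 1$, $x^{2^n}=(x^{2^{n-1}})^2$.
   Context: A loop is a set $Q$ with a binary operation (juxtaposition) and neutral element $e$ such that for all $a,b$ the equations $ax=b$, $ya=b$ have unique solutions. A Jordan loop is a commutative loop satisfying $x^2(yx)=(x^2y)x$. For $k\ge 0$, $x^k$ denotes the right-associated product $x(x(\cdots(xe)\cdots))$ with $k$ factors $x$ (so $x^0=e$, $x^1=x$). For an element $y$, $y^2=yy$. *)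

(* Defs.v *)
From mathcomp Require Import all_boot.
Set Implicit Arguments. Unset Strict Implicit. Unset Printing Implicit Defensive.

Definition is_loop (T : Type) (mul : T -> T -> T) (e : T) : Prop :=
  (forall a, mul e a = a /\ mul a e = a) /\
  (forall a b, exists! x, mul a x = b) /\
  (forall a b, exists! y, mul y a = b).

Definition is_jordan_loop (T : Type) (mul : T -> T -> T) (e : T) : Prop :=
  is_loop mul e /\
  (forall a b, mul a b = mul b a) /\
  (forall x y, mul (mul x x) (mul y x) = mul (mul (mul x x) y) x).

Definition lpow (T : Type) (mul : T -> T -> T) (e : T) (x : T) (k : nat) : T :=
  iter k (mul x) e.

(* Main.v *)
Require Import Defs.
From mathcomp Require Import all_boot.

Definition Pp {T : Type} (mul : T -> T -> T) (e x : T) (j n : nat) :=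
  mul (lpow mul e x n) (lpow mul e x (2 ^ j)) = lpow mul e x (n + 2 ^ j).

Definition good (k n : nat) :=
  exists m : nat, m <= k - 1 /\ n %% 2 ^ (k - 1) = 2 ^ m %% 2 ^ (k - 1).

Lemma e2 k : 1 <= k -> 2 ^ (k - 1) + 2 ^ (k - 1) = 2 ^ k.
Proof. by case: k => // k _; rewrite subn1 /= addnn -mul2n -expnS. Qed.

Lemma modD_dvd d a n : d %| a -> (n + a) %% d = n %% d.
Proof. by move/dvdnP=> [q ->]; rewrite addnC modnMDl. Qed.

Lemma pow_mod0 j m : j <= m -> 2 ^ m %% 2 ^ j = 0.
Proof. by move=> h; apply/eqP; rewrite -/(dvdn _ _) dvdn_exp2l. Qed.

Lemma good_shift k n : good k n -> good k (n + 2 ^ (k - 1)).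
Proof. by move=> [m [hm h]]; exists m; rewrite modD_dvd. Qed.

Lemma good_dec k n : good k n -> good (k - 1) n.
Proof.
move=> [m [hm h]].
have hd : 2 ^ (k - 1 - 1) %| 2 ^ (k - 1) by rewrite dvdn_exp2l // leq_subr.
case: (leqP m (k - 1 - 1)) => hm2.
  exists m; split=> //.
  by rewrite -(modn_dvdm n hd) h (modn_dvdm _ hd).
exists (k - 1 - 1); split=> //.
rewrite -(modn_dvdm n hd) h (modn_dvdm _ hd) pow_mod0 ?modnn //.
exact: ltnW.
Qed.

Lemma good_dec2 k n : good k n -> good (k - 1) (n + 2 ^ k).
Proof.
move=> /good_dec [m [hm h]]; exists m; split=> //.
rewrite modD_dvd // dvdn_exp2l //.
apply: (leq_trans (leq_subr 1 _)); exact: leq_subr.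
Qed.


Lemma step (T : Type) (mul : T -> T -> T) (e x : T)
  (Hc : forall a b, mul a b = mul b a)
  (Hj : forall x y, mul (mul x x) (mul y x) = mul (mul (mul x x) y) x)
  k n : 1 <= k -> Pp mul e x (k - 1) (2 ^ (k - 1)) -> Pp mul e x (k - 1) n ->
  Pp mul e x (k - 1) (n + 2 ^ k) -> Pp mul e x k n ->
  Pp mul e x k (n + 2 ^ (k - 1)).
Proof.
rewrite /Pp => hk Hz Hn Hn2 Hk.
rewrite e2 // in Hz.
have := Hj (lpow mul e x (2 ^ (k - 1))) (lpow mul e x n).
rewrite Hz Hn -(Hc (lpow mul e x n)) Hk Hn2 => H.
by rewrite Hc H addnAC.
Qed.

Lemma good_pow j i : j <= i -> good j (2 ^ i).
Proof. move=> h; exists (j - 1); split=> //; rewrite !pow_mod0 //.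
exact: (leq_trans (leq_subr 1 _)). Qed.

Lemma allP (T : Type) (mul : T -> T -> T) (e x : T)
  (He : forall a, mul e a = a /\ mul a e = a)
  (Hc : forall a b, mul a b = mul b a)
  (Hj : forall x y, mul (mul x x) (mul y x) = mul (mul (mul x x) y) x) :
  forall k n, good k n -> Pp mul e x k n.
Proof.
have H : forall K k, k <= K -> forall n, good k n -> Pp mul e x k n.
  elim=> [|K IHK] k hk.
    move: hk; rewrite leqn0 => /eqP -> n _.
    by rewrite /Pp expn0 addn1 /= (proj2 (He x)) Hc.
  case: k hk => [|k] hk.
    by move=> n _; rewrite /Pp expn0 addn1 /= (proj2 (He x)) Hc.
  have IH : forall j, j <= k -> forall n, good j n -> Pp mul e x j n.
    by move=> j hj; apply: IHK; apply: leq_trans hj _.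
  have hk1 : k.+1 - 1 = k by rewrite subn1.
  move=> n; elim: n {-2}n (leqnn n) => [|N IHN] n hn gn.
    move: hn; rewrite leqn0 => /eqP ->.
    by rewrite /Pp /= (proj1 (He _)) add0n.
  case: (ltnP n (2 ^ k)) => hlt.
    move: gn => [m [hm hmod]]; rewrite hk1 in hm hmod.
    rewrite modn_small // in hmod.
    case: (ltnP m k) => hmk.
      rewrite modn_small ?ltn_exp2l // in hmod; rewrite hmod /Pp Hc addnC.
      apply: IH; first exact: ltnW.
      by apply: good_pow; apply: ltnW; apply: ltnW.
    have em : m = k by apply/eqP; rewrite eqn_leq hm hmk.
    rewrite em modnn in hmod; rewrite hmod.
    by rewrite /Pp /= (proj1 (He _)) add0n.
  have hn' : n = (n - 2 ^ k) + 2 ^ (k.+1 - 1) by rewrite hk1 subnK.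
  have gn' : good k.+1 (n - 2 ^ k).
    move: gn => [m [hm hmod]]; exists m; split=> //.
    by rewrite -hmod {2}hn' modD_dvd.
  rewrite hn'; apply: step => //.
  - rewrite hk1; apply: IH => //; exact: good_pow.
  - rewrite hk1; apply: IH => //; have := @good_dec _ _ gn'; by rewrite hk1.
  - rewrite hk1; apply: IH => //; have := @good_dec2 _ _ gn'; by rewrite hk1.
  - apply: IHN => //.
    rewrite -ltnS; apply: leq_trans hn.
    by rewrite ltn_subrL expn_gt0 /=; apply: leq_trans hlt; rewrite expn_gt0.
by move=> k n; apply: (H k).
Qed.

Lemma allfrom (T : Type) (mul : T -> T -> T) (e x : T)
  (Hc : forall a b, mul a b = mul b a)
  (Hj : forall x y, mul (mul x x) (mul y x) = mul (mul (mul x x) y) x) k :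
  1 <= k -> (forall n, Pp mul e x (k - 1) n) ->
  (forall n, n < 2 ^ (k - 1) -> Pp mul e x k n) -> forall n, Pp mul e x k n.
Proof.
move=> hk Hprev Hbase n; elim: n {-2}n (leqnn n) => [|N IHN] n hn.
  by apply: Hbase; move: hn; rewrite leqn0 => /eqP ->; rewrite expn_gt0.
case: (ltnP n (2 ^ (k - 1))) => hlt; first exact: Hbase.
rewrite -(subnK hlt); apply: step => //; apply: IHN.
rewrite -ltnS; apply: leq_trans hn.
by rewrite ltn_subrL expn_gt0 /=; apply: leq_trans hlt; rewrite expn_gt0.
Qed.

Theorem lemma2p2 (T : Type) (mul : T -> T -> T) (e : T)
  (HQ : is_jordan_loop mul e) (x : T) :
  let p := lpow mul e x in
  (* (i) *)
  (forall n : nat, mul (p n) (p 2) = p (n + 2)) /\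
  (* (ii) *)
  (forall n : nat, mul (p n) (p 4) = p (n + 4)) /\
  (* (iii) *)
  ((forall n : nat, n %% 4 != 3 -> mul (p n) (p 8) = p (n + 8)) /\
   (mul (p 3) (p 8) = p 11 -> forall n : nat, mul (p n) (p 8) = p (n + 8))) /\
  (* (iv) *)
  (forall k n : nat, 1 <= k ->
     (exists m : nat, m <= k - 1 /\ n = 2 ^ m %[mod 2 ^ (k - 1)]) ->
     mul (p n) (p (2 ^ k)) = p (n + 2 ^ k)) /\
  (* (v) *)
  (forall n : nat, 1 <= n ->
     p (2 ^ n) = mul (p (2 ^ (n - 1))) (p (2 ^ (n - 1)))).
Proof.
move: HQ => [[He _] [Hc Hj]] p.
have A := @allP _ mul e x He Hc Hj.
have P2 : forall n, Pp mul e x 2 n.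
  move=> n; apply: A; case hn: (odd n).
    by exists 0; rewrite modn2 hn.
  by exists 1; rewrite modn2 hn.
have P3 : forall n, n %% 4 != 3 -> Pp mul e x 3 n.
  move=> n h; apply: A; move: h; rewrite /good (_ : 2 ^ (3 - 1) = 4) //.
  have := ltn_pmod n (isT : 0 < 4).
  case: (n %% 4) => [|[|[|[|]]]] // _ _.
  - by exists 2; split.
  - by exists 0; split.
  - by exists 1; split.
split; first by move=> n; apply: (A 1); exists 0; rewrite !modn1.
split; first exact: P2.
split; first split.
- exact: P3.
- move=> h3; apply: (@allfrom _ mul e x Hc Hj 3) => //.
  case=> [|[|[|[|]]]] // _; try by apply: P3.
split; first by move=> k n _; apply: A.
move=> n hn; rewrite -e2 //; symmetry; apply: A; exact: good_pow.
Qed.
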